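(* Every connected $4$-regular graph of order at least $7$ has a foresty minimum vertex cut.
   Context: All graphs are finite and simple. A vertex cut of a connected graph $G$ is a set $S\subset V(G)$ such that $G-S$ is disconnected. If $G$ has connectivity $k$, a vertex cut $S$ is called minimum if $|S|=k$. A vertex cut $S$ is called a foresty vertex cut if the induced subgraph $G[S]$ is a forest. *)

(* Defs.v *)
(* A simple graph = symmetric irreflexive relation e on a finType T. *)
From mathcomp Require Import all_boot.
Set Implicit Arguments. Unset Strict Implicit. Unset Printing Implicit Defensive.

Section Graphs.
Variables (T : finType) (e : rel T).

Definition connected_graph : Prop := forall x y : T, connect e x y.

Definition regular (k : nat) : Prop := forall x : T, #|[set y | e x y]| = k.

Definition del_rel (S : {set T}) : rel T :=
  [rel u v | [&& e u v, u \notin S & v \notin S]].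

Definition vertex_cut (S : {set T}) : Prop :=
  exists x y : T, [/\ x \notin S, y \notin S & ~~ connect (del_rel S) x y].

Definition minimum_vertex_cut (S : {set T}) : Prop :=
  vertex_cut S /\ forall S' : {set T}, vertex_cut S' -> #|S| <= #|S'|.

Definition induced_forest (S : {set T}) : Prop :=
  ~ exists p : seq T, [/\ uniq p, 3 <= size p, {subset p <= S} & cycle e p].

Definition foresty_vertex_cut (S : {set T}) : Prop :=
  vertex_cut S /\ induced_forest S.

End Graphs.

(* Main.v *)
Require Import Defs.
From mathcomp Require Import all_boot.
From Stdlib Require Import Classical.
From mathcomp Require Import zify.

Set Implicit Arguments. Unset Strict Implicit. Unset Printing Implicit Defensive.

Section Proofs.
Variables (T : finType) (e : rel T).
Hypothesis e_sym : symmetric e.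
Hypothesis e_irr : irreflexive e.
Hypothesis Hreg : regular e 4.

Record sep (S C R : {set T}) : Prop := Sep {
  sep_cov : forall v, [|| v \in S, v \in C | v \in R];
  sep_SC : forall v, v \in S -> v \in C -> False;
  sep_SR : forall v, v \in S -> v \in R -> False;
  sep_CR : forall v, v \in C -> v \in R -> False;
  sep_C : exists c, c \in C;
  sep_R : exists r, r \in R;
  sep_noe : forall u v, u \in C -> v \in R -> ~~ e u v }.

Lemma sep_sym S C R : sep S C R -> sep S R C.
Proof.
case=> cov dSC dSR dCR hC hR noe; split => //.
- by move=> v; have := cov v; case: (v \in S); case: (v \in C); case: (v \in R).
- by move=> v vR vC; exact: dCR vC vR.
- by move=> u v uR vC; rewrite e_sym; apply: noe.
Qed.

Lemma sep_cut S C R : sep S C R -> vertex_cut e S.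
Proof.
case=> cov dSC dSR dCR [c cC] [r rR] noe; exists c, r; split.
- by apply/negP => cS; exact: dSC cS cC.
- by apply/negP => rS; exact: dSR rS rR.
apply/negP => /connectP [p pth lst].
suff: last c p \in C by rewrite -lst => rC; exact: dCR rC rR.
elim: p c cC pth {lst} => [|x p IH] c cC //= /andP [cx pth].
apply: IH pth; move: cx; rewrite /del_rel /= => /and3P [exx _ xS].
case/or3P: (cov x) => //; first by rewrite (negbTE xS).
by move=> xR; rewrite (negbTE (noe _ _ cC xR)) in exx.
Qed.

Lemma cut_sep S : vertex_cut e S -> exists C R, sep S C R.
Proof.
case=> x [y [xS yS nxy]].
exists [set z | (z \notin S) && connect (del_rel e S) x z].
exists [set z | (z \notin S) && ~~ connect (del_rel e S) x z]; split.
- by move=> v; rewrite !inE; case: (v \in S); case: connect.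
- by move=> v vS; rewrite inE vS.
- by move=> v vS; rewrite inE vS.
- by move=> v; rewrite !inE => /andP[_ ->] /andP[_].
- by exists x; rewrite inE xS connect0.
- by exists y; rewrite inE yS nxy.
move=> u v; rewrite !inE => /andP [uS cu] /andP [vS ncv]; apply/negP => euv.
move/negP: ncv; apply; apply: connect_trans cu _; apply: connect1.
by rewrite /del_rel /= euv uS vS.
Qed.

Lemma nbr_bound v (l : seq T) : uniq l -> all (e v) l -> size l <= 4.
Proof.
move=> ul al; rewrite -(Hreg v) cardE; apply: uniq_leq_size ul _ => w wl.
by rewrite mem_enum inE; exact: (allP al).
Qed.

Lemma has_nbr S C R : minimum_vertex_cut e S -> sep S C R ->
  forall s, s \in S -> exists2 c, c \in C & e s c.
Proof.
move=> [_ Hmin] [cov dSC dSR dCR [c cC] [r rR] noe] s sS.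
case: (boolP [exists c, (c \in C) && e s c]) => [/existsP [c' /andP[]]|/existsPn H].
  by move=> ? ?; exists c'.
have cut : vertex_cut e (S :\ s).
  apply: (@sep_cut _ C (s |: R)); split.
  - by move=> v; rewrite !inE; have := cov v; case: (v == s) => /=; rewrite ?orbT.
  - by move=> v; rewrite inE => /andP[_ vS]; exact: dSC.
  - move=> v; rewrite !inE => /andP [vs vS] /orP [/eqP vs'| vR].
      by rewrite vs' eqxx in vs.
    exact: dSR vS vR.
  - move=> v vC; rewrite !inE => /orP [vs|vR]; last exact: dCR vC vR.
    by move: vC; rewrite (eqP vs) => vC; exact: dSC sS vC.
  - by exists c.
  - by exists s; rewrite !inE eqxx.
  move=> u v uC; rewrite !inE => /orP [/eqP ->|vR]; last exact: noe.
  by have := H u; rewrite uC /= e_sym.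
have := Hmin _ cut; rewrite (cardsD1 s S) sS.
by rewrite add1n ltnn.
Qed.

Lemma cycle_nbrs (q : seq T) v : uniq q -> 2 < size q -> cycle e q -> v \in q ->
  exists u w, [/\ u \in q, w \in q, u != w, e v u & e v w].
Proof.
move=> uq sq cq vq; case: (rot_to vq) => i s' rq.
have uq' : uniq (v :: s') by rewrite -rq rot_uniq.
have cq' : cycle e (v :: s') by rewrite -rq rot_cycle.
have sq' : 2 < size (v :: s') by rewrite -rq size_rot.
have mq : forall z, z \in v :: s' -> z \in q by move=> z; rewrite -rq mem_rot.
move: uq' cq' sq' mq; case: s' {rq} => [|y [|z r]] //= uq' cq' _ mq.
move: cq'; rewrite rcons_path /= => /and4P [evy _ _ elv].
exists y, (last z r); split.
- by apply: mq; rewrite !inE eqxx orbT.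
- by apply: mq; rewrite (in_cons v) (in_cons y) mem_last !orbT.
- apply/eqP => yl; move: uq' => /and4P [_ ynin _ _].
  by move: ynin; rewrite yl mem_last.
- exact: evy.
- by rewrite e_sym.
Qed.

Lemma swap_sep (S C R X : {set T}) a : sep S C R -> a \in C -> (exists2 c, c \in C & c != a) ->
  X \subset S -> (forall x c, x \in X -> c \in C -> e x c -> c = a) ->
  sep (a |: (S :\: X)) (C :\ a) (X :|: R).
Proof.
move=> [cov dSC dSR dCR _ [r rR] noe] aC [c cC ca] XS Xu; split.
- move=> v; rewrite !inE; case: (v == a) => //=.
  case vX: (v \in X) => /=; first by rewrite !orbT.
  exact: cov.
- move=> v; rewrite !inE => /orP [/eqP ->|/andP [_ vS]] /andP [va vC].
    by rewrite eqxx in va.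
  exact: dSC vS vC.
- move=> v; rewrite !inE => /orP [/eqP ->|/andP [vX vS]] /orP [vX'|vR].
  + exact: dSC (subsetP XS _ vX') aC.
  + exact: dCR aC vR.
  + by rewrite vX' in vX.
  + exact: dSR vS vR.
- move=> v; rewrite !inE => /andP [_ vC] /orP [vX|vR].
  + exact: dSC (subsetP XS _ vX) vC.
  + exact: dCR vC vR.
- by exists c; rewrite !inE ca cC.
- by exists r; rewrite !inE rR orbT.
move=> u v; rewrite !inE => /andP [ua uC] /orP [vX|vR]; last exact: noe.
apply/negP => euv; have := Xu v u vX uC; rewrite e_sym euv => /(_ isT) uaE.
by rewrite uaE eqxx in ua.
Qed.

Lemma card_swap (S X : {set T}) a : a \notin S -> X \subset S ->
  #|a |: (S :\: X)| = (#|S| - #|X|).+1.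
Proof.
move=> aS XS; rewrite cardsU1 cardsD (setIidPr XS).
by rewrite inE negb_and aS orbT.
Qed.

Lemma ar1 n : 2 <= n -> n <= (n - 2).+1 -> False.
Proof. lia. Qed.

Lemma ar2 m n : 2 < m -> n <= 4 -> m.+2 <= n -> False.
Proof. lia. Qed.

Lemma ar3 a b t : a <= 5 -> 7 <= t -> a + b = t -> 0 < b.
Proof. lia. Qed.

Lemma ar4 a b c : 7 <= a + b + c -> a <= 4 -> b < 2 -> 2 <= c.
Proof. lia. Qed.

Lemma neq_dis (A B : {set T}) x y : (forall v, v \in A -> v \in B -> False) ->
  x \in A -> y \in B -> (x == y) = false.
Proof. by move=> H xA yB; apply/negbTE/eqP => xy; rewrite xy in xA; exact: H xA yB. Qed.

Lemma neq_dis' (A B : {set T}) x y : (forall v, v \in A -> v \in B -> False) ->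
  x \in A -> y \in B -> (y == x) = false.
Proof. by move=> H xA yB; rewrite eq_sym; exact: neq_dis H xA yB. Qed.

Lemma main_swap S C R (q : seq T) : minimum_vertex_cut e S -> sep S C R ->
  2 <= #|C| -> #|S| <= 4 -> uniq q -> 2 < size q -> {subset q <= S} -> cycle e q ->
  exists S', minimum_vertex_cut e S' /\ foresty_vertex_cut e S'.
Proof.
move=> mS sp C2 S4 uq sq qS cq.
have [cov dSC dSR dCR _ _ noe] := sp.
have [cut Hmin] := mS.
have uniqC : forall v u w c c', v \in S -> u \in S -> w \in S -> u != w ->
    e v u -> e v w -> c \in C -> c' \in C -> e v c -> e v c' -> c = c'.
  move=> v u w c c' vS uS wS uw evu evw cC c'C evc evc'.
  have [r rR evr] := has_nbr mS (sep_sym sp) vS.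
  apply/eqP; apply/negPn/negP => cc'.
  have := @nbr_bound v [:: u; w; r; c; c'].
  rewrite /= !inE (negbTE uw) (neq_dis dSR uS rR) (neq_dis dSC uS cC).
  rewrite (neq_dis dSC uS c'C) (neq_dis dSR wS rR) (neq_dis dSC wS cC).
  rewrite (neq_dis dSC wS c'C) (neq_dis' dCR cC rR) (neq_dis' dCR c'C rR).
  by rewrite (negbTE cc') evu evw evr evc evc' => /(_ isT isT).
have [s sq_] : exists s, s \in q.
  by case: (q) sq => [|s0 ?] //= _; exists s0; rewrite inE eqxx.
have sS := qS _ sq_.
have [u [w [uq_ wq_ uw esu esw]]] := cycle_nbrs uq sq cq sq_.
have [a aC esa] := has_nbr mS sp sS.
have aU : forall c, c \in C -> e s c -> c = a.
  by move=> c cC esc; apply: (uniqC s u w c a sS (qS _ uq_) (qS _ wq_) uw esu esw cC aC esc esa).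
have [c cC ca] : exists2 c, c \in C & c != a.
  have : 0 < #|C :\ a| by move: C2; rewrite (cardsD1 a C) aC.
  by case/card_gt0P => c; rewrite !inE => /andP [ca cC]; exists c.
have aS : a \notin S by apply/negP => aS; exact: dSC aS aC.
have S0 : 0 < #|S| by apply/card_gt0P; exists s.
set S' := a |: (S :\: [set s]).
have sp' : sep S' (C :\ a) ([set s] :|: R).
  apply: swap_sep => //; first by exists c.
    by rewrite sub1set.
  by move=> x c0; rewrite inE => /eqP ->; exact: aU.
have cS' : #|S'| = #|S| by rewrite card_swap // ?sub1set // cards1 subn1 prednK.
have mS' : minimum_vertex_cut e S'.
  by split; [exact: sep_cut sp' | move=> S'' cS''; rewrite cS'; exact: Hmin].
exists S'; split => //; split; first exact: mS'.1.
have inS' : forall x, x \in S' -> x != a -> (x \in S) && (x != s).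
  by move=> x; rewrite !inE => /orP [->|/andP [xs xS]] //; rewrite xS xs.
have neqa : forall x, e a x -> x != a.
  by move=> x eax; apply/eqP => xa; rewrite xa e_irr in eax.
move=> [q' [uq' sq' qS' cq']].
case: (boolP (a \in q')) => aq'.
- have [u' [w' [uq'' wq'' uw' eau ew]]] := cycle_nbrs uq' sq' cq' aq'.
  have key : forall t, t \in q -> t \in S -> t != s -> e a t -> False.
    move=> t tq tS ts eat.
    have [t1 [t2 [t1q t2q t12 et1 et2]]] := cycle_nbrs uq sq cq tq.
    have tU : forall c0, c0 \in C -> e t c0 -> c0 = a.
      move=> c0 c0C etc.
      apply: (uniqC t t1 t2 c0 a tS (qS _ t1q) (qS _ t2q) t12 et1 et2 c0C aC etc).
      by rewrite e_sym.
    have XS : [set s; t] \subset S by rewrite subUset !sub1set sS tS.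
    have spY : sep (a |: (S :\: [set s; t])) (C :\ a) ([set s; t] :|: R).
      apply: swap_sep => //; first by exists c.
      by move=> x c0; rewrite !inE => /orP [/eqP ->|/eqP ->]; [exact: aU | exact: tU].
    have := Hmin _ (sep_cut spY); rewrite card_swap // cards2 eq_sym ts.
    have := subset_leq_card XS; rewrite cards2 eq_sym ts /=.
    exact: ar1.
  have : (u' \in q) || (w' \in q).
    apply/negPn/negP; rewrite negb_or => /andP [un wn].
    have /andP [u'S u's] := inS' _ (qS' _ uq'') (neqa _ eau).
    have /andP [w'S w's] := inS' _ (qS' _ wq'') (neqa _ ew).
    have : size (u' :: w' :: q) <= #|S|.
      rewrite cardE; apply: uniq_leq_size.
        by rewrite /= !inE negb_or uw' un wn uq.
      move=> x; rewrite !inE mem_enum => /or3P [/eqP->|/eqP->|xq] //.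
      exact: qS.
    by move=> /= H; apply: (ar2 sq S4 H).
  case/orP => [tq|tq].
    have /andP [tS ts] := inS' _ (qS' _ uq'') (neqa _ eau).
    exact: key tq tS ts eau.
  have /andP [tS ts] := inS' _ (qS' _ wq'') (neqa _ ew).
  exact: key tq tS ts ew.
- have inq' : forall x, x \in q' -> (x \in S) && (x != s).
    move=> x xq; apply: inS'; first exact: qS'.
    by apply/eqP => xa; rewrite -xa xq in aq'.
  have sq'n : s \notin q'.
    by apply/negP => /inq' /andP [_]; rewrite eqxx.
  have uS := qS _ uq_.
  have us : u != s by apply/eqP => us; rewrite us e_irr in esu.
  have uq2 : u \in q'.
    apply/negPn/negP => un.
    have : size (u :: s :: q') <= #|S|.
      rewrite cardE; apply: uniq_leq_size.
        by rewrite /= !inE negb_or us un sq'n uq'.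
      move=> x; rewrite !inE mem_enum => /or3P [/eqP->|/eqP->|xq] //.
      by case/andP: (inq' _ xq).
    by move=> /= H; apply: (ar2 sq' S4 H).
  have [w1 [w2 [w1q w2q w12 ew1 ew2]]] := cycle_nbrs uq' sq' cq' uq2.
  have [c1 c1C euc] := has_nbr mS sp uS.
  have [r1 r1R eur] := has_nbr mS (sep_sym sp) uS.
  have /andP [w1S w1s] := inq' _ w1q.
  have /andP [w2S w2s] := inq' _ w2q.
  have := @nbr_bound u [:: w1; w2; s; c1; r1].
  rewrite /= !inE (negbTE w12) (negbTE w1s) (negbTE w2s).
  rewrite (neq_dis dSC w1S c1C) (neq_dis dSR w1S r1R).
  rewrite (neq_dis dSC w2S c1C) (neq_dis dSR w2S r1R).
  rewrite (neq_dis dSC sS c1C) (neq_dis dSR sS r1R) (neq_dis dCR c1C r1R).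
  by rewrite ew1 ew2 (e_sym u s) esu euc eur => /(_ isT isT).
Qed.

Definition cutb (S : {set T}) :=
  [exists x, exists y, [&& x \notin S, y \notin S & ~~ connect (del_rel e S) x y]].

Lemma cutbP S : reflect (vertex_cut e S) (cutb S).
Proof.
apply: (iffP existsP) => [[x /existsP [y /and3P [xS yS nc]]]|[x [y [xS yS nc]]]].
  by exists x, y.
by exists x; apply/existsP; exists y; rewrite xS yS nc.
Qed.

Lemma final : 7 <= #|T| ->
  exists S : {set T}, minimum_vertex_cut e S /\ foresty_vertex_cut e S.
Proof.
move=> Horder.
have [x _] : exists x : T, x \in T.
  by apply/card_gt0P; apply: leq_trans Horder.
set N := [set y | e x y].
have cN : #|N| = 4 by exact: Hreg.
have [y yn] : exists y, y \in ~: (x |: N).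
  apply/card_gt0P; apply: (ar3 _ Horder (cardsC (x |: N))).
  by rewrite cardsU1 cN; case: (x \notin N).
have spN : sep N [set x] (~: (x |: N)).
  split.
  - by move=> v; rewrite !inE; case: (v == x); case: (e x v); rewrite ?orbT.
  - by move=> v; rewrite !inE => exv /eqP vx; rewrite vx e_irr in exv.
  - by move=> v; rewrite !inE negb_or => ev /andP [_]; rewrite ev.
  - by move=> v; rewrite !inE => -> .
  - by exists x; rewrite inE.
  - by exists y.
  by move=> u v; rewrite !inE negb_or => /eqP -> /andP [_].
have ex : exists n, [exists S : {set T}, (#|S| == n) && cutb S].
  by exists #|N|; apply/existsP; exists N; rewrite eqxx; apply/cutbP; exact: sep_cut spN.
case: (ex_minnP ex) => m /existsP [S /andP [/eqP cS /cutbP cutS]] Hm.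
have mS : minimum_vertex_cut e S.
  split => // S' cut'; rewrite cS; apply: Hm; apply/existsP; exists S'.
  by rewrite eqxx; apply/cutbP.
have S4 : #|S| <= 4 by rewrite -cN; apply: mS.2; exact: sep_cut spN.
case: (classic (induced_forest e S)) => [F|nF].
  by exists S; split => //; split => //; exact: mS.1.
have [q [uq sq qS cq]] := NNPP _ nF.
have [C [R sp]] := cut_sep cutS.
have big : 7 <= #|S| + #|C| + #|R|.
  apply: leq_trans Horder _; rewrite -cardsT.
  have sub : [set: T] \subset S :|: C :|: R.
    apply/subsetP => v _.
    by have := sep_cov sp v; rewrite !inE; case/or3P => ->; rewrite ?orbT.
  apply: (leq_trans (subset_leq_card sub)).
  apply: leq_trans (leq_card_setU _ _) _; rewrite leq_add2r; exact: leq_card_setU.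
case: (leqP 2 #|C|) => C2.
  exact: (main_swap mS sp C2 S4 uq sq qS cq).
have R2 : 2 <= #|R| by apply: (ar4 big S4 C2).
exact: (main_swap mS (sep_sym sp) R2 S4 uq sq qS cq).
Qed.

End Proofs.

Theorem lemma9 (T : finType) (e : rel T)
  (e_sym : symmetric e) (e_irr : irreflexive e)
  (Hconn : connected_graph e) (Hreg : regular e 4) (Horder : 7 <= #|T|) :
  exists S : {set T}, minimum_vertex_cut e S /\ foresty_vertex_cut e S.
Proof. exact: final e_sym e_irr Hreg Horder. Qed.
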